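(* In the discrete torus model with frame group $\mathbb{Z}_4$ and the 2-dimensional calculus $\mathcal C=\{\bar1,\bar3\}$ (context), the torsion-free and cotorsion-free spin connections are exactly \[A_{\bar1}=(-\alpha-\tfrac{s_1}{2})e_1+(\beta-\tfrac{s_2}{2})e_2,\qquad A_{\bar3}=(\beta-\tfrac{s_1}{2})e_1+(\alpha-\tfrac{s_2}{2})e_2,\] for functions $\alpha,\beta$ such that $a=\alpha+\beta$, $b=\beta-\alpha$ satisfy $(R_1+R_2)a=0=(R_1+R_2)b$, where $s_1=\bar\partial^2\Theta_1$, $s_2=\bar\partial^1\Theta_2$. Their covariant derivative is \[\nabla e_1=(b-s_1)e_1\otimes e_1+a\,e_1\otimes e_2+(a-s_2)e_2\otimes e_1-b\,e_2\otimes e_2,\] \[\nabla e_2=-a\,e_1\otimes e_1+(b-s_1)e_1\otimes e_2+b\,e_2\otimes e_1+(a-s_2)e_2\otimes e_2,\] and such a connection is regular if and only if $s_1\,\bar\partial^2a-s_2\,\bar\partial^1b=0$.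
   Context: Discrete torus model: $\Sigma=\mathbb{Z}_2\times\mathbb{Z}_2$, $x\to y$ iff $y-x\in\{(1,0),(0,1)\}$; diagonal zweibein $e_{1,x,x+(1,0)}=\Theta_1(x)^{-1}$, $e_{2,x,x+(0,1)}=\Theta_2(x)^{-1}$, $\Theta_a$ nowhere-vanishing with $\Theta_1R_1\Theta_2=\Theta_2R_2\Theta_1$; $R_1f(x)=f(x+(1,0))$, $R_2f(x)=f(x+(0,1))$, $\bar\partial^a=R_a-\mathrm{id}$; $e_af=R_a(f)e_a$, $\mathrm{d}f=\sum_a(\bar\partial^af)\Theta_ae_a$; two-forms $e_1\wedge e_2=-e_2\wedge e_1$, $e_a\wedge e_a=0$; $\mathrm{d}e_1=(\bar\partial^1\Theta_2)e_1\wedge e_2$, $\mathrm{d}e_2=-(\bar\partial^2\Theta_1)e_1\wedge e_2$. Frame group $\mathbb{Z}_4$ acting by quarter rotations ($\bar1$: $e_1\mapsto e_2$, $e_2\mapsto-e_1$), calculus $\mathcal C=\{\bar1,\bar3\}$; $f^{\bar1}\triangleright e_1=e_2-e_1$, $f^{\bar1}\triangleright e_2=-e_1-e_2$, $f^{\bar3}\triangleright e_1=-e_1-e_2$, $f^{\bar3}\triangleright e_2=e_1-e_2$. Spin connection: 1-forms $A_{\bar1},A_{\bar3}$. Torsion-free: $\mathrm{d}e_a+\sum_iA_i\wedge(f^i\triangleright e_a)=0$; cotorsion-free: $\mathrm{d}e_a+(f^{\bar3}\triangleright e_a)\wedge A_{\bar1}+(f^{\bar1}\triangleright e_a)\wedge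 A_{\bar3}=0$; regular: $A_{\bar1}\wedge A_{\bar1}+A_{\bar3}\wedge A_{\bar3}=0$. Covariant derivative $\nabla(\sum\alpha^ae_a)=\sum\mathrm{d}\alpha^a\otimes e_a-\sum_{i,a}\alpha^aA_i\otimes f^i\triangleright e_a$. *)

(* Defs.v *)
From HB Require Import structures.
From mathcomp Require Import all_boot all_order all_algebra.
Set Implicit Arguments. Unset Strict Implicit. Unset Printing Implicit Defensive.
Import Order.TTheory GRing.Theory Num.Theory.
Local Open Scope ring_scope.

Definition pt := ('Z_2 * 'Z_2)%type.
Definition dir1 : pt := (1, 0).
Definition dir2 : pt := (0, 1).

Section Torus.
Variable K : fieldType.

Definition fn := pt -> K.

Definition R1 (f : fn) : fn := fun x => f (x + dir1).
Definition R2 (f : fn) : fn := fun x => f (x + dir2).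
Definition Ra (a : 'I_2) (f : fn) : fn := if a == 0 then R1 f else R2 f.
Definition dbar1 (f : fn) : fn := fun x => R1 f x - f x.
Definition dbar2 (f : fn) : fn := fun x => R2 f x - f x.

(* A 1-form sum_a om_a e_a (coefficients written on the left),
   stored as its coefficient family a |-> om_a. *)
Definition form1 := 'I_2 -> fn.
Definition e1 : form1 := fun a _ => if a == 0 then 1 else 0.
Definition e2 : form1 := fun a _ => if a == 0 then 0 else 1.
Definition mkform1 (w1 w2 : fn) : form1 := fun a => if a == 0 then w1 else w2.

Definition addf1 (w v : form1) : form1 := fun a x => w a x + v a x.
Definition oppf1 (w : form1) : form1 := fun a x => - w a x.
Definition lmulf1 (f : fn) (w : form1) : form1 := fun a x => f x * w a x.

(* A 2-form  c e_1/\e_2, stored as the coefficient c. *)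
Definition form2 := fn.

(* Wedge product, using e_a f = R_a(f) e_a, e_a/\e_a = 0, e_2/\e_1 = - e_1/\e_2:
   (w1 e1 + w2 e2) /\ (v1 e1 + v2 e2) = (w1 R1(v2) - w2 R2(v1)) e1/\e2. *)
Definition wedge (w v : form1) : form2 :=
  fun x => w 0 x * R1 (v 1) x - w 1 x * R2 (v 0) x.

Definition dfn (Th1 Th2 : fn) (f : fn) : form1 :=
  mkform1 (fun x => dbar1 f x * Th1 x) (fun x => dbar2 f x * Th2 x).

Definition de1 (Th1 Th2 : fn) : form2 := dbar1 Th2.
Definition de2 (Th1 Th2 : fn) : form2 := fun x => - dbar2 Th1 x.
Definition de (Th1 Th2 : fn) (a : 'I_2) : form2 :=
  if a == 0 then de1 Th1 Th2 else de2 Th1 Th2.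

Definition d1 (Th1 Th2 : fn) (w : form1) : form2 :=
  fun x => \sum_(a < 2) (wedge (dfn Th1 Th2 (w a)) (if a == 0 then e1 else e2) x
                         + w a x * de Th1 Th2 a x).

(* Frame group Z_4 acting by quarter rotations:
   1 : e1 |-> e2, e2 |-> -e1 (on constant coefficients, i.e. left linearly). *)
Definition rot1 (w : form1) : form1 := mkform1 (fun x => - w 1 x) (w 0).
Definition rot (g : 'Z_4) (w : form1) : form1 := iter (g : nat) rot1 w.
(* f^g |> v = g.v - v  (this gives f^1|>e1 = e2-e1, f^1|>e2 = -e1-e2,
   f^3|>e1 = -e1-e2, f^3|>e2 = e1-e2, as in the paper). *)
Definition fact (g : 'Z_4) (w : form1) : form1 := addf1 (rot g w) (oppf1 w).

Definition basis (a : 'I_2) : form1 := if a == 0 then e1 else e2.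

Definition torsion_free (Th1 Th2 : fn) (A1 A3 : form1) : Prop :=
  forall a : 'I_2, forall x,
    de Th1 Th2 a x + wedge A1 (fact 1 (basis a)) x + wedge A3 (fact 3 (basis a)) x = 0.

Definition cotorsion_free (Th1 Th2 : fn) (A1 A3 : form1) : Prop :=
  forall a : 'I_2, forall x,
    de Th1 Th2 a x + wedge (fact 3 (basis a)) A1 x + wedge (fact 1 (basis a)) A3 x = 0.

Definition regular (A1 A3 : form1) : Prop :=
  forall x, wedge A1 A1 x + wedge A3 A3 x = 0.

(* Tensor products Omega^1 (x)_A Omega^1: sum_{a,b} c_{ab} e_a (x) e_b,
   stored as (a, b) |-> c_{ab}. *)
Definition form11 := 'I_2 -> 'I_2 -> fn.
Definition tens (w v : form1) : form11 := fun a b x => w a x * Ra a (v b) x.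
Definition add11 (t u : form11) : form11 := fun a b x => t a b x + u a b x.
Definition opp11 (t : form11) : form11 := fun a b x => - t a b x.
Definition zero11 : form11 := fun _ _ _ => 0.

Definition nabla (Th1 Th2 : fn) (A1 A3 : form1) (w : form1) : form11 :=
  \big[add11/zero11]_(a < 2)
    add11 (tens (dfn Th1 Th2 (w a)) (basis a))
          (opp11 (add11 (tens (lmulf1 (w a) A1) (fact 1 (basis a)))
                        (tens (lmulf1 (w a) A3) (fact 3 (basis a))))).

Definition mkform11 (c11 c12 c21 c22 : fn) : form11 :=
  fun a b => if a == 0 then (if b == 0 then c11 else c12)
             else (if b == 0 then c21 else c22).

End Torus.

(* Main.v *)
Require Import Defs.
From HB Require Import structures.
From mathcomp Require Import all_boot all_order all_algebra.
From Stdlib Require Import FunctionalExtensionality.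
From mathcomp Require Import ring.
Import Order.TTheory GRing.Theory Num.Theory.
Local Open Scope ring_scope.
Lemma ord2 (i : 'I_2) : i = 0 \/ i = 1.
Proof. case: i => [[|[|i]] Hi]; [left|right|by []]; exact/val_inj. Qed.
Lemma d11 (x : pt) : x + dir1 + dir1 = x.
Proof. rewrite -addrA. have -> : dir1 + dir1 = 0 by apply/eqP. by rewrite addr0. Qed.
Lemma d22 (x : pt) : x + dir2 + dir2 = x.
Proof. rewrite -addrA. have -> : dir2 + dir2 = 0 by apply/eqP. by rewrite addr0. Qed.
Section S.
Variable K : fieldType.
Lemma lc1 (X l1 c1 : K) : l1 = 0 -> X = c1 * l1 -> X = 0.
Proof. by move=> -> ->; rewrite mulr0. Qed.
Lemma lc2 (X l1 l2 c1 c2 : K) : l1 = 0 -> l2 = 0 -> X = c1 * l1 + c2 * l2 -> X = 0.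
Proof. by move=> -> -> ->; rewrite !mulr0 addr0. Qed.
Lemma rot_1 (w : form1 K) : Defs.rot 1 w = rot1 w. Proof. by []. Qed.
Lemma rot_3 (w : form1 K) : Defs.rot 3 w = rot1 (rot1 (rot1 w)). Proof. by []. Qed.
Lemma s2R (Th2 : fn K) x : dbar1 Th2 (x + dir1) = - dbar1 Th2 x.
Proof. by rewrite /dbar1 /R1 d11 opprB. Qed.
Lemma s1R (Th1 : fn K) x : dbar2 Th1 (x + dir2) = - dbar2 Th1 x.
Proof. by rewrite /dbar2 /R2 d22 opprB. Qed.

Lemma tf_pt Th1 Th2 (A1 A3 : form1 K) : torsion_free Th1 Th2 A1 A3 <->
  forall x, dbar1 Th2 x + A1 0 x + A1 1 x - A3 0 x + A3 1 x = 0 /\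
            - dbar2 Th1 x - A1 0 x + A1 1 x - A3 0 x - A3 1 x = 0.
Proof.
rewrite /torsion_free /fact /Defs.rot /addf1 /oppf1 /rot1 /mkform1 /basis /e1 /e2 /wedge /de /de1 /de2 /R1 /R2 /=.
split.
  move=> H x; split.
    have := H 0 x => /=; move=> E; apply: (lc1 _ _ 1 E); ring.
  have := H 1 x => /=; move=> E; apply: (lc1 _ _ 1 E); ring.
move=> H a x; case: (H x) => E1 E2; case: (ord2 a) => -> /=.
  apply: (lc1 _ _ 1 E1); ring.
apply: (lc1 _ _ 1 E2); ring.
Qed.

Lemma ctf_pt Th1 Th2 (A1 A3 : form1 K) : cotorsion_free Th1 Th2 A1 A3 <->
  forall x, dbar1 Th2 x - A1 1 (x + dir1) + A1 0 (x + dir2) - A3 1 (x + dir1) - A3 0 (x + dir2) = 0 /\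
            - dbar2 Th1 x + A1 1 (x + dir1) + A1 0 (x + dir2) - A3 1 (x + dir1) + A3 0 (x + dir2) = 0.
Proof.
rewrite /cotorsion_free /fact /Defs.rot /addf1 /oppf1 /rot1 /mkform1 /basis /e1 /e2 /wedge /de /de1 /de2 /R1 /R2 /=.
split.
  move=> H x; split.
    have := H 0 x => /=; move=> E; apply: (lc1 _ _ 1 E); ring.
  have := H 1 x => /=; move=> E; apply: (lc1 _ _ 1 E); ring.
move=> H a x; case: (H x) => E1 E2; case: (ord2 a) => -> /=.
  apply: (lc1 _ _ 1 E1); ring.
apply: (lc1 _ _ 1 E2); ring.
Qed.
Lemma lc3 (X l1 l2 l3 c1 c2 c3 : K) : l1 = 0 -> l2 = 0 -> l3 = 0 -> X = c1 * l1 + c2 * l2 + c3 * l3 -> X = 0.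
Proof. by move=> -> -> -> ->; rewrite !mulr0 !addr0. Qed.
End S.
Arguments lc3 {K X l1 l2 l3} c1 c2 c3 _ _ _ _.
Arguments lc1 {K X l1} c1 _ _.
Arguments lc2 {K X l1 l2} c1 c2 _ _ _.

Theorem proposition4p5 (K : fieldType) (two_neq0 : (2%:R : K) != 0)
  (Th1 Th2 : fn K)
  (hTh1 : forall x, Th1 x != 0) (hTh2 : forall x, Th2 x != 0)
  (hTh : forall x, Th1 x * R1 Th2 x = Th2 x * R2 Th1 x) :
  let s1 := dbar2 Th1 in
  let s2 := dbar1 Th2 in
  let A1of (al be : fn K) := mkform1 (fun x => - al x - s1 x / 2%:R)
                                     (fun x => be x - s2 x / 2%:R) in
  let A3of (al be : fn K) := mkform1 (fun x => be x - s1 x / 2%:R)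
                                     (fun x => al x - s2 x / 2%:R) in
  let adm (al be : fn K) :=
    (forall x, R1 (fun y => al y + be y) x + R2 (fun y => al y + be y) x = 0) /\
    (forall x, R1 (fun y => be y - al y) x + R2 (fun y => be y - al y) x = 0) in
  (* classification of torsion-free and cotorsion-free spin connections *)
  (forall A1 A3 : form1 K,
     torsion_free Th1 Th2 A1 A3 /\ cotorsion_free Th1 Th2 A1 A3 <->
     exists al be : fn K, adm al be /\ A1 = A1of al be /\ A3 = A3of al be) /\
  (forall al be : fn K, adm al be ->
     let a := fun x => al x + be x in
     let b := fun x => be x - al x in
     let A1 := A1of al be in
     let A3 := A3of al be in
     (* covariant derivative *)
     nabla Th1 Th2 A1 A3 (e1 K) =
       mkform11 (fun x => b x - s1 x) a (fun x => a x - s2 x) (fun x => - b x) /\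
     nabla Th1 Th2 A1 A3 (e2 K) =
       mkform11 (fun x => - a x) (fun x => b x - s1 x) b (fun x => a x - s2 x) /\
     (* regularity *)
     (regular A1 A3 <-> forall x, s1 x * dbar2 a x - s2 x * dbar1 b x = 0)).
Proof.
move=> s1 s2 A1of A3of adm.
rewrite {}/adm {}/A1of {}/A3of {}/s1 {}/s2.
split.
  move=> A1 A3; rewrite tf_pt ctf_pt; split.
    move=> [T C].
    exists (fun x => A3 1 x + dbar1 Th2 x / 2%:R), (fun x => A3 0 x + dbar2 Th1 x / 2%:R).
    have P1 : forall y, A1 0 y = - A3 1 y - dbar1 Th2 y / 2%:R - dbar2 Th1 y / 2%:R.
      move=> z; case: (T z) => E1 E2; apply: (subr0_eq).
      apply: (lc2 (1/2%:R) (-1/2%:R) E1 E2); (field; exact: two_neq0).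
    have P2 : forall y, A1 1 y = A3 0 y + dbar2 Th1 y / 2%:R - dbar1 Th2 y / 2%:R.
      move=> z; case: (T z) => E1 E2; apply: (subr0_eq).
      apply: (lc2 (1/2%:R) (1/2%:R) E1 E2); (field; exact: two_neq0).
    split; [split|split].
    - move=> x; case: (C x) => E1 _; move: E1; rewrite P1 P2 /R1 /R2 s2R => E1.
      apply: (lc1 (-1) E1); (field; exact: two_neq0).
    - move=> x; case: (C x) => _ E1; move: E1; rewrite P1 P2 /R1 /R2 s1R => E1.
      apply: (lc1 1 E1); (field; exact: two_neq0).
    - apply: functional_extensionality => a; apply: functional_extensionality => x.
      rewrite /mkform1; case: (ord2 a) => -> /=; [rewrite P1|rewrite P2]; (field; exact: two_neq0).
    - apply: functional_extensionality => a; apply: functional_extensionality => x.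
      rewrite /mkform1; case: (ord2 a) => -> /=; (field; exact: two_neq0).
  move=> [al [be [[U V] [-> ->]]]]; split => x; rewrite /mkform1 /=; split.
  - (field; exact: two_neq0).
  - (field; exact: two_neq0).
  - have := U x; rewrite /R1 /R2 s2R => E; apply: (lc1 (-1) E); (field; exact: two_neq0).
  - have := V x; rewrite /R1 /R2 s1R => E; apply: (lc1 1 E); (field; exact: two_neq0).
move=> al be [U V].
split; [|split].
- rewrite /nabla !big_ord_recl big_ord0.
  apply: functional_extensionality => i; apply: functional_extensionality => j.
  apply: functional_extensionality => x.
  rewrite /add11 /opp11 /tens /lmulf1 /dfn /mkform1 /basis /e1 /e2 /fact /Defs.rot /addf1 /oppf1 /rot1 /Ra /R1 /R2 /dbar1 /dbar2 /zero11 /mkform11.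
  case: (ord2 i) => ->; case: (ord2 j) => -> /=; rewrite /mkform1 /R1 /R2 /=; (field; exact: two_neq0).
- rewrite /nabla !big_ord_recl big_ord0.
  apply: functional_extensionality => i; apply: functional_extensionality => j.
  apply: functional_extensionality => x.
  rewrite /add11 /opp11 /tens /lmulf1 /dfn /mkform1 /basis /e1 /e2 /fact /Defs.rot /addf1 /oppf1 /rot1 /Ra /R1 /R2 /dbar1 /dbar2 /zero11 /mkform11.
  case: (ord2 i) => ->; case: (ord2 j) => -> /=; rewrite /mkform1 /R1 /R2 /=; (field; exact: two_neq0).
- rewrite /regular /wedge /mkform1 /=.
  split => h x; have Wx := h x; have Ux := U x; have Vx := V x;
    move: Wx Ux Vx; rewrite /dbar1 /dbar2 /R1 /R2 /= !d11 !d22 => Wx Ux Vx.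
  + apply: (lc3 2%:R (- 2%:R * (((be x - al x) - (Th1 (x + dir2) - Th1 x)) / 2%:R))
                     (- 2%:R * (- ((al x + be x) - (Th2 (x + dir1) - Th2 x)) / 2%:R)) Wx Ux Vx).
    field; exact: two_neq0.
  + apply: (lc3 (1/2%:R) (((be x - al x) - (Th1 (x + dir2) - Th1 x)) / 2%:R)
                     (- ((al x + be x) - (Th2 (x + dir1) - Th2 x)) / 2%:R) Wx Ux Vx).
    field; exact: two_neq0.
Qed.
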